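(* For $O\in\mathbb{R}^2$ let $v$ be a uniform random point in $[0,1]^2$, $g_1(O):=\mathbb{E}(d(O,v))$, and $g_2(O):=\mathbb{E}\left(\min\{d(O,v),\tfrac34 g_1(O)\}\right)$. Then for all $O,O'\in\mathbb{R}^2$, $|g_2(O)-g_2(O')|\le d(O,O')$.
   Context: $d$ is Euclidean distance. *)

(* Defs.v *)
From Stdlib Require Import Reals Lra.
From Coquelicot Require Import Coquelicot.
Open Scope R_scope.

Definition d (p q : R * R) : R :=
  sqrt ((fst p - fst q) ^ 2 + (snd p - snd q) ^ 2).

(* Expectation of f(v) for v uniform on [0,1]^2 (Lebesgue measure of the unit
   square is 1), written as an iterated Riemann integral; all integrands used
   below are continuous on the square, so this equals the Lebesgue expectation. *)
Definition E_unit_square (f : R * R -> R) : R :=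
  RInt (fun x => RInt (fun y => f (x, y)) 0 1) 0 1.

Definition g1 (O : R * R) : R := E_unit_square (fun v => d O v).

Definition g2 (O : R * R) : R :=
  E_unit_square (fun v => Rmin (d O v) (3 / 4 * g1 O)).

(* Main.v *)
Require Import Defs.
From Stdlib Require Import Reals Lra.
From Coquelicot Require Import Coquelicot.
Open Scope R_scope.

Lemma sqrt_le_sum (a b c e : R) :
  sqrt ((a+b)^2 + (c+e)^2) <= sqrt (a^2+c^2) + sqrt (b^2+e^2).
Proof.
  set (A := a^2+c^2). set (B := b^2+e^2).
  assert (HA : 0 <= A) by (unfold A; nra).
  assert (HB : 0 <= B) by (unfold B; nra).
  pose proof (sqrt_pos A). pose proof (sqrt_pos B).
  pose proof (sqrt_sqrt A HA). pose proof (sqrt_sqrt B HB).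
  assert (HAB : Rabs (a*b+c*e) <= sqrt A * sqrt B).
  { rewrite <- sqrt_mult_alt by exact HA. rewrite <- sqrt_Rsqr_abs.
    apply sqrt_le_1_alt. unfold Rsqr, A, B. pose proof (pow2_ge_0 (a*e - c*b)). nra. }
  assert (Hy : (a+b)^2 + (c+e)^2 <= Rsqr (sqrt A + sqrt B)).
  { unfold Rsqr. pose proof (Rle_abs (a*b+c*e)). unfold A, B in *. nra. }
  eapply Rle_trans. apply sqrt_le_1_alt. exact Hy.
  rewrite sqrt_Rsqr; lra.
Qed.

Lemma d_tri p q r : d p q <= d p r + d r q.
Proof.
  unfold d. destruct p as [p1 p2], q as [q1 q2], r as [r1 r2]; simpl.
  replace (p1 - q1) with ((p1-r1)+(r1-q1)) by ring.
  replace (p2 - q2) with ((p2-r2)+(r2-q2)) by ring.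
  apply sqrt_le_sum.
Qed.

Lemma d_sym p q : d p q = d q p.
Proof. unfold d. f_equal. ring. Qed.

Lemma d_line x x' y : d (x,y) (x',y) = Rabs (x - x').
Proof. unfold d; simpl. rewrite <- sqrt_Rsqr_abs. f_equal. unfold Rsqr. ring. Qed.

Lemma d_line2 x y y' : d (x,y) (x,y') = Rabs (y - y').
Proof. unfold d; simpl. rewrite <- sqrt_Rsqr_abs. f_equal. unfold Rsqr. ring. Qed.

Definition Lip (h : R * R -> R) := forall u v, Rabs (h u - h v) <= d u v.

Lemma lip_cont (f : R -> R) : (forall x y, Rabs (f x - f y) <= Rabs (x - y)) ->
  forall z, continuous f z.
Proof.
  intros Hf z. apply continuity_pt_filterlim.
  intros eps Heps. exists eps. split; [lra|].
  intros x [_ Hx]. simpl in *. unfold R_dist in *.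
  eapply Rle_lt_trans; [apply Hf|exact Hx].
Qed.

Lemma ex_lip (f : R -> R) : (forall x y, Rabs (f x - f y) <= Rabs (x - y)) ->
  ex_RInt f 0 1.
Proof. intros Hf. apply (@ex_RInt_continuous R_CompleteNormedModule). intros; now apply lip_cont. Qed.

Lemma RInt_close (f g : R -> R) (del : R) : ex_RInt f 0 1 -> ex_RInt g 0 1 ->
  (forall t, 0 <= t <= 1 -> Rabs (f t - g t) <= del) ->
  Rabs (RInt f 0 1 - RInt g 0 1) <= del.
Proof.
  intros Hf Hg H.
  pose proof (RInt_minus f g 0 1 Hf Hg) as E.
  change (RInt (fun x => f x - g x) 0 1 = RInt f 0 1 - RInt g 0 1) in E.
  rewrite <- E.
  replace del with ((1 - 0) * del) by ring.
  apply abs_RInt_le_const; [lra| |exact H].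
  apply (ex_RInt_minus f g); assumption.
Qed.

Lemma inner_ex h x : Lip h -> ex_RInt (fun y => h (x,y)) 0 1.
Proof. intros Hh. apply ex_lip. intros y1 y2. rewrite <- (d_line2 x y1 y2). apply Hh. Qed.

Lemma outer_lip h : Lip h -> forall x x',
  Rabs (RInt (fun y => h (x,y)) 0 1 - RInt (fun y => h (x',y)) 0 1) <= Rabs (x - x').
Proof.
  intros Hh x x'. apply RInt_close; try apply inner_ex; auto.
  intros. rewrite <- (d_line x x' t). apply Hh.
Qed.

Lemma E_close h1 h2 del : Lip h1 -> Lip h2 -> (forall v, Rabs (h1 v - h2 v) <= del) ->
  Rabs (E_unit_square h1 - E_unit_square h2) <= del.
Proof.
  intros H1 H2 H. unfold E_unit_square. apply RInt_close.
  - apply ex_lip. apply outer_lip; auto.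
  - apply ex_lip. apply outer_lip; auto.
  - intros. apply RInt_close; try apply inner_ex; auto.
Qed.

Lemma d_lip O : Lip (fun v => d O v).
Proof.
  intros u v. pose proof (d_tri O u v). pose proof (d_tri O v u).
  rewrite (d_sym v u) in *. apply Rabs_le; lra.
Qed.

Lemma d_lipO v O O' : Rabs (d O v - d O' v) <= d O O'.
Proof.
  pose proof (d_tri O v O'). pose proof (d_tri O' v O).
  rewrite (d_sym O' O) in H0. apply Rabs_le; lra.
Qed.

Lemma Rmin_lip a b a' b' del : Rabs (a - a') <= del -> Rabs (b - b') <= del ->
  Rabs (Rmin a b - Rmin a' b') <= del.
Proof.
  intros H1 H2. apply Rabs_le_between in H1. apply Rabs_le_between in H2.
  unfold Rmin; destruct (Rle_dec a b); destruct (Rle_dec a' b'); apply Rabs_le; lra.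
Qed.

Lemma min_lip O C : Lip (fun v => Rmin (d O v) C).
Proof.
  intros u v. apply Rmin_lip. apply d_lip. rewrite Rminus_eq_0, Rabs_R0.
  unfold d; apply sqrt_pos.
Qed.

Lemma g1_lip O O' : Rabs (g1 O - g1 O') <= d O O'.
Proof. apply E_close; try apply d_lip. intros; apply d_lipO. Qed.

Theorem lemma20 (O O' : R * R) : Rabs (g2 O - g2 O') <= d O O'.
Proof.
  apply E_close; try apply min_lip. intros v. apply Rmin_lip. apply d_lipO.
  pose proof (g1_lip O O'). pose proof (sqrt_pos ((fst O - fst O')^2 + (snd O - snd O')^2)).
  fold (d O O') in H0.
  replace (3/4 * g1 O - 3/4 * g1 O') with (3/4 * (g1 O - g1 O')) by ring.
  rewrite Rabs_mult, (Rabs_right (3/4)) by lra. lra.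
Qed.
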